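(* Let $H$ be a connected graph and let $v\in \mathrm{MS}(H)$. Then every loopless connected component of $H|v$ consists of a single isolated vertex.
   Context: Graphs are finite, may have loops, but no multiple edges; an edge is either $\{u\}$ (a loop at $u$) or $\{u,w\}$ with $u\ne w$. A vertex is isolated if no edge (including a loop) is incident to it. A graph is loopless if no vertex is looped. For $v\in V(H)$, $N_H(v)=\{u\in V(H): u\neq v,\ \{u,v\}\in E(H)\}$. Let $L$ be the set of looped vertices; $N^l_H(v)=N_H(v)\cap L$ and $N^{ul}_H(v)=N_H(v)\setminus L$. Define $s(v)=|N^{ul}_H(v)|-|N^l_H(v)|$, and let $\mathrm{MS}(H)$ be the set of looped vertices $v$ of $H$ such that $s(w)\le s(v)$ for all $w\in N^l_H(v)$. For a looped vertex $v$, the local complement $H*v$ is the graph on $V(H)$ such that for every $p\subseteq V(H)$ with $|p|\in\{1,2\}$: $p\in E(H*v)$ iff either ($p\notin E(H)$ and $p\subseteq N_H(v)$) or ($p\in E(H)$ and $p\not\subseteq N_H(v)$). $H*_c v$ is obtained from $H*v$ by removing all edges incident to $v$, including its loop; $H|v$ is obtained from $H*_c v$ by deleting the vertex $v$. *)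

(* Defs.v *)
(* A graph with loops on a finite vertex type T is a
   symmetric relation e : rel T; {u,w} (u<>w) is an edge iff e u w,
   and {u} (a loop) is an edge iff e u u. *)
From mathcomp Require Import all_boot all_order all_algebra.
Set Implicit Arguments. Unset Strict Implicit. Unset Printing Implicit Defensive.
Import GRing.Theory Num.Theory.

Section Graphs.
Variables (T : finType) (e : rel T).

Definition nbh (v : T) : {set T} := [set u | (u != v) && e u v].
Definition looped (u : T) : bool := e u u.
Definition nbh_l (v : T) : {set T} := [set u in nbh v | looped u].
Definition nbh_ul (v : T) : {set T} := [set u in nbh v | ~~ looped u].
Definition sdeg (v : T) : int := (#|nbh_ul v|%:Z - #|nbh_l v|%:Z)%R.
Definition MS : {set T} :=
  [set v | looped v && [forall w in nbh_l v, (sdeg w <= sdeg v)%R]].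

(* local complement H*v : p = {x,y} (x = y allowed, giving loops) is an edge
   iff (p notin E and p subset N(v)) or (p in E and p not subset N(v)) *)
Definition lcomp (v : T) : rel T :=
  fun x y => e x y (+) ((x \in nbh v) && (y \in nbh v)).
Definition lcomp_c (v : T) : rel T :=
  fun x y => [&& x != v, y != v & lcomp v x y].
Definition lcomp_del (v : T) : rel {x : T | x != v} :=
  fun x y => lcomp_c v (val x) (val y).

Definition graph_connected : Prop := forall x y : T, connect e x y.
End Graphs.
Arguments lcomp_del {T} e v.

(* Main.v *)
Require Import Defs.
From mathcomp Require Import all_boot all_order all_algebra.
From mathcomp Require Import zify.
Set Implicit Arguments. Unset Strict Implicit. Unset Printing Implicit Defensive.

Lemma arith (a b c d c' d' : nat) : (b%:Z - c%:Z <= a%:Z - d%:Z)%R -> c = true + c' -> d = true + d' -> a <= b -> c' <= d' -> (a < b) || (c' < d') -> False.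
Proof. lia. Qed.

Section S.
Variables (T : finType) (e : rel T) (He : symmetric e) (v : T).

Lemma ldE (a b : {x : T | x != v}) :
  lcomp_del e v a b = e (val a) (val b) (+) ((val a \in nbh e v) && (val b \in nbh e v)).
Proof. by case: a b => a ha [b hb]; rewrite /lcomp_del /lcomp_c /lcomp /= ha hb. Qed.

Lemma ld_sym : symmetric (lcomp_del e v).
Proof. by move=> a b; rewrite !ldE He andbC. Qed.

Lemma iso_from (r : rel {x : T | x != v}) z y :
  (forall y, ~~ r z y) -> connect r z y -> y = z.
Proof.
move=> iso /connectP [[|b p]] /=; first by move=> _ ->.
by case/andP=> h _; rewrite (negbTE (iso b)) in h.
Qed.

Lemma iso_lemma (Hv : v \in MS e) (x : {x : T | x != v}) :
  val x \in nbh e v ->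
  (forall y, lcomp_del e v x y -> ~~ lcomp_del e v y y) ->
  ~~ lcomp_del e v x x -> forall y, ~~ lcomp_del e v x y.
Proof.
case: x => x0 hx /= Hxn Hl Hxx.
have lx0 : e x0 x0.
  by move: Hxx; rewrite ldE /= Hxn /=; case: (e x0 x0).
move: Hv; rewrite inE /looped => /andP[lv /forall_inP Hs].
have exv : e x0 v by move: Hxn; rewrite inE => /andP[].
have C1 : nbh_ul e v \subset nbh_ul e x0.
  apply/subsetP => y; rewrite !inE /looped => /andP[/andP[yv eyv] nly].
  have yx : y != x0 by apply/eqP => E; rewrite E lx0 in nly.
  rewrite yx nly /= andbT.
  have := Hl (exist _ y yv); rewrite !ldE /= !inE hx exv yv eyv (negbTE nly) /=.
  by rewrite He; case: (e y x0) => //= /(_ isT).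
have C2 : nbh_l e x0 :\ v \subset nbh_l e v :\ x0.
  apply/subsetP => y; rewrite !inE /looped => /andP[yv /andP[/andP[yx eyx] ly]].
  rewrite yx yv ly /= andbT.
  apply/negPn/negP => nyv.
  have := Hl (exist _ y yv); rewrite !ldE /= !inE hx exv yv (negbTE nyv) ly /=.
  by rewrite He eyx => /(_ isT).
have vl : v \in nbh_l e x0.
  by rewrite !inE /looped eq_sym hx He exv lv.
have x0l : x0 \in nbh_l e v by rewrite !inE /looped hx exv lx0.
have cx := cardsD1 v (nbh_l e x0); rewrite vl in cx.
have cv := cardsD1 x0 (nbh_l e v); rewrite x0l in cv.
have Hsd := Hs _ x0l; move: Hsd; rewrite /sdeg => Hsd.
move=> [y yv]; apply/negP => Hy.
have yx : y != x0.
  apply/eqP => E; subst y; move: Hy; rewrite (_ : exist _ x0 yv = exist _ x0 hx) //.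
    by rewrite (negbTE Hxx).
  by apply: val_inj.
have Hyy := Hl _ Hy; move: Hy Hyy; rewrite !ldE /= Hxn /=.
case yN : (y \in nbh e v) => /= Hy Hyy.
- have ly : e y y by move: Hyy; case: (e y y).
  have P : nbh_l e x0 :\ v \proper nbh_l e v :\ x0.
    apply/properP; split=> //; exists y.
      by rewrite !inE yx /looped ly andbT; move: yN; rewrite inE.
    by rewrite !inE He; move: Hy; case: (e x0 y); rewrite /= ?andbF.
  exact: (arith Hsd cx cv (subset_leq_card C1) (subset_leq_card C2) (introT orP (or_intror (proper_card P)))).
- have ly : ~~ e y y by move: Hyy; case: (e y y).
  have P : nbh_ul e v \proper nbh_ul e x0.
    apply/properP; split=> //; exists y.
      by rewrite !inE yx /looped ly He /= andbT; move: Hy; rewrite addbF.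
    by rewrite !inE; move: yN; rewrite inE => ->.
  exact: (arith Hsd cx cv (subset_leq_card C1) (subset_leq_card C2) (introT orP (or_introl (proper_card P)))).
Qed.
End S.

Theorem mainTheorem5 (T : finType) (e : rel T) (He : symmetric e)
    (Hconn : graph_connected e) (v : T) (Hv : v \in MS e) :
  forall x : {x : T | x != v},
    (* the connected component of x in H|v is loopless *)
    (forall y, connect (lcomp_del e v) x y -> ~~ lcomp_del e v y y) ->
    (* then it is the single vertex x, and x is isolated *)
    (forall y, connect (lcomp_del e v) x y -> y = x) /\
    (forall y, ~~ lcomp_del e v x y).
Proof.
move=> x Hloop.
have Csym : connect_sym (lcomp_del e v) := sym_connect_sym (@ld_sym T e He v).
case: (boolP [exists z, connect (lcomp_del e v) x z && (val z \in nbh e v)]).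
- case/existsP => z /andP[cxz zN].
  have iso := iso_lemma He Hv zN
    (fun y hy => Hloop y (connect_trans cxz (connect1 hy))) (Hloop z cxz).
  have xz : x = z by apply: (iso_from iso); rewrite Csym.
  subst z; split=> // y cy; exact: (iso_from iso).
- move/existsPn => Hn; exfalso.
  have := Hconn (val x) v; case/connectP => p.
  suff H : forall a (z : {x : T | x != v}), connect (lcomp_del e v) x z ->
      val z = a -> path e a p -> exists z', connect (lcomp_del e v) x z' /\ val z' = last a p.
    move=> pp lp; have [z' [_ hz']] := H _ x (connect0 _ _) erefl pp.
    by move: (valP z'); rewrite hz' -lp eqxx.
  elim: p => [|b p IH] a z cz za /=; first by move=> _; exists z.
  case/andP => eab pp.
  have := Hn z; rewrite cz /= inE za => /nandP [/negPn av|nav].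
    by move: (valP z); rewrite za av.
  have bv : b != v by apply/eqP => E; rewrite -E eab in nav.
  apply: (IH b (exist _ b bv)) => //.
  apply: (connect_trans cz); apply: connect1; rewrite ldE /= za eab.
  by rewrite inE (negbTE nav) andbF.
Qed.
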